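(* Let $P_1, \ldots, P_M$ be probability densities on a space $\mathcal{X}$, and let $\pi_1, \ldots, \pi_M \in [0,1]$ with $\sum_{i=1}^M \pi_i = 1$ be arbitrary weights. Then $$ JS(P_1, \ldots, P_M) \le JS_{GM}(P_1, \ldots, P_M), $$ where $JS(P_1,\ldots,P_M) = \sum_{i=1}^M \pi_i\, KL\big(P_i \,\Vert\, \overline{P}\big)$ with $\overline{P} = \sum_{i=1}^M \pi_i P_i$, and $JS_{GM}(P_1,\ldots,P_M) = \sum_{i=1}^M \sum_{j \neq i} \pi_i \pi_j\, KL(P_i \Vert P_j)$.
   Context: For densities $P, Q$ on $\mathcal{X}$, $KL(P\Vert Q) = \int_{\mathcal{X}} P(x)\ln\frac{P(x)}{Q(x)}\,dx$ (the Kullback–Leibler divergence). The quantity $JS_{GM}$ equals $\sum_{i=1}^M \pi_i \int_{\mathcal{X}} P_i(x)\ln\frac{P_i(x)}{\overline{P}'(x)}\,dx$ where $\overline{P}' = \prod_{j=1}^M P_j^{\pi_j}$ is the weighted geometric mean (not necessarily a probability density); it is called the Jensen–Shannon divergence with geometric mean. *)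

(* Defs.v *)
From HB Require Import structures.
From mathcomp Require Import all_boot all_order all_algebra.
From mathcomp Require Import all_classical all_reals all_analysis.
Set Implicit Arguments. Unset Strict Implicit. Unset Printing Implicit Defensive.
Import Order.TTheory GRing.Theory Num.Theory.
Local Open Scope ring_scope.
Local Open Scope ereal_scope.

Definition kl_integrand (R : realType) (p q : R) : \bar R :=
  if p == 0%R then 0 else if q == 0%R then +oo else (p * ln (p / q))%:E.

Definition KL (d : measure_display) (T : measurableType d) (R : realType)
  (mu : {measure set T -> \bar R}) (P Q : T -> R) : \bar R :=
  \int[mu]_x kl_integrand (P x) (Q x).

Definition is_density (d : measure_display) (T : measurableType d) (R : realType)
  (mu : {measure set T -> \bar R}) (P : T -> R) : Prop :=
  measurable_fun setT P /\ (forall x, (0 <= P x)%R) /\ \int[mu]_x (P x)%:E = 1.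

Definition mixture (T : Type) (R : realType) (M : nat) (pi : 'I_M -> R)
  (P : 'I_M -> T -> R) : T -> R :=
  fun x => (\sum_(i < M) pi i * P i x)%R.

Definition JS (d : measure_display) (T : measurableType d) (R : realType)
  (mu : {measure set T -> \bar R}) (M : nat) (pi : 'I_M -> R)
  (P : 'I_M -> T -> R) : \bar R :=
  \sum_(i < M) (pi i)%:E * KL mu (P i) (mixture pi P).

Definition JS_GM (d : measure_display) (T : measurableType d) (R : realType)
  (mu : {measure set T -> \bar R}) (M : nat) (pi : 'I_M -> R)
  (P : 'I_M -> T -> R) : \bar R :=
  \sum_(i < M) \sum_(j < M | j != i) (pi i * pi j)%:E * KL mu (P i) (P j).

(* Main.v *)
Require Import Defs.
From HB Require Import structures.
From mathcomp Require Import all_boot all_order all_algebra.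
From mathcomp Require Import all_classical all_reals all_analysis.
From mathcomp Require Import ring lra.
From mathcomp Require Import measurable_realfun lebesgue_integral.
Import Order.TTheory GRing.Theory Num.Theory.
Local Open Scope ring_scope.

Section real.
Variable R : realType.

Lemma ln_le_sub1 (x : R) : 0 < x -> ln x <= x - 1.
Proof.
move=> x0; have := @le_ln1Dx R (x - 1).
have -> : 1 + (x - 1) = x by ring.
by apply; lra.
Qed.

Lemma kl_lb (p q : R) : 0 <= p -> 0 <= q ->
  ((p - q)%:E <= kl_integrand p q)%E.
Proof.
move=> p0 q0; rewrite /kl_integrand.
have [->|pn0] := eqVneq p 0; first by rewrite lee_fin sub0r oppr_le0.
have [->|qn0] := eqVneq q 0; first exact: leey.
have pp : 0 < p by rewrite lt_def pn0.
have qp : 0 < q by rewrite lt_def qn0.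
rewrite lee_fin.
have h := @ln_le_sub1 (q / p) (divr_gt0 qp pp).
rewrite ln_div ?posrE // in h.
rewrite ln_div ?posrE //.
have h2 : p * (ln q - ln p) <= p * (q / p - 1) by rewrite ler_wpM2l // ltW.
have e : p * (q/p - 1) = q - p by rewrite mulrBr mulr1 mulrC divfK.
have e2 : p * (ln p - ln q) = - (p * (ln q - ln p)) by ring.
lra.
Qed.


Lemma kl_ge_p (p q : R) : 0 <= p -> 0 <= q ->
  (p%:E <= kl_integrand p q + q%:E)%E.
Proof.
move=> p0 q0; rewrite -[X in (X%:E <= _)%E](subrK q p) EFinD.
exact: (leeD2r _ (kl_lb p q p0 q0)).
Qed.

Lemma kl_diag (p : R) : kl_integrand p p = 0%E.
Proof.
rewrite /kl_integrand; have [//|pn0] := eqVneq p 0.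
by rewrite divff // ln1 mulr0.
Qed.

Lemma kl_mix (M : nat) (pi : 'I_M -> R) (p : R) (q : 'I_M -> R) :
  0 <= p -> (forall j, 0 <= pi j) -> (forall j, 0 <= q j) ->
  \sum_(j < M) pi j = 1 ->
  (kl_integrand p (\sum_(j < M) pi j * q j) + (\sum_(j < M) pi j * q j)%:E <=
   \sum_(j < M) (pi j)%:E * (kl_integrand p (q j) + (q j)%:E))%E.
Proof.
move=> p0 pi0 q0 hsum; set m := \sum_(j < M) pi j * q j.
have m0 : 0 <= m by apply: sumr_ge0 => j _; rewrite mulr_ge0.
have klq j : (p%:E <= kl_integrand p (q j) + (q j)%:E)%E.
  rewrite -[X in (X%:E <= _)%E](subrK (q j) p) EFinD.
  exact: (leeD2r _ (kl_lb p (q j) p0 (q0 j))).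
have [->|pn0] := eqVneq p 0.
  rewrite /kl_integrand eqxx.
  under eq_bigr do rewrite add0e -EFinM.
  by rewrite add0e sumEFin.
have pp : 0 < p by rewrite lt_def pn0 p0.
case: (pselect (exists j, 0 < pi j /\ q j = 0)) => [[j [pj qj]]|nex].
  rewrite (bigD1 j) //= {2}/kl_integrand qj eqxx (negbTE pn0) adde0.
  rewrite gt0_muley ?lte_fin // addye ?leey //.
  rewrite gt_eqF // (lt_le_trans ltNy0) //; apply: sume_ge0 => i _.
  apply: mule_ge0; first by rewrite lee_fin.
  by apply: le_trans (klq i); rewrite lee_fin.
have hj j : pi j = 0 \/ 0 < q j.
  have [pj0|pjn0] := eqVneq (pi j) 0; [by left|right].
  rewrite lt_def q0 andbT; apply/eqP => qj; apply: nex; exists j; split => //.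
  by rewrite lt_def pjn0 pi0.
have mp : 0 < m.
  rewrite lt_def m0 andbT; apply/eqP => m00.
  have h0 := psumr_eq0P (fun j _ => mulr_ge0 (pi0 j) (q0 j)) m00.
  suff : \sum_(j < M) pi j = 0 by rewrite hsum => /eqP; rewrite oner_eq0.
  apply: big1 => j _; case: (hj j) => // qj.
  by have /eqP := h0 j isT; rewrite mulf_eq0 (gt_eqF qj) orbF => /eqP.
rewrite {1}/kl_integrand (gt_eqF mp) (negbTE pn0) -EFinD.
rewrite (eq_bigr (fun j => (pi j * (p * ln (p / q j) + q j))%:E)); last first.
  move=> j _; case: (hj j) => [->|qj]; first by rewrite mul0e mul0r.
  by rewrite /kl_integrand (negbTE pn0) (gt_eqF qj) -EFinD -EFinM.
rewrite sumEFin lee_fin.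
have E1 : p * ln (p / m) + m =
    \sum_(j < M) (pi j * (p * ln (p / m)) + pi j * q j).
  by rewrite big_split /= -mulr_suml hsum mul1r.
have E0 : \sum_(j < M) p * pi j * (q j / m - 1) = 0.
  rewrite (eq_bigr (fun j => p / m * (pi j * q j) - p * pi j)); last first.
    by move=> j _; field; rewrite gt_eqF.
  rewrite big_split /= sumrN -mulr_sumr -/m -mulr_sumr hsum mulr1.
  by rewrite mulfVK ?gt_eqF // subrr.
have E2 : \sum_(i < M) pi i * (p * ln (p / q i) + q i) =
   \sum_(i < M) (pi i * (p * ln (p / q i) + q i) + p * pi i * (q i / m - 1)).
  by rewrite big_split /= E0 addr0.
rewrite E1 E2; apply: ler_sum => j _.
case: (hj j) => [->|qj]; first by rewrite !(mul0r, mulr0) !addr0.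
have h := @ln_le_sub1 (q j / m) (divr_gt0 qj mp).
rewrite ln_div ?posrE // in h.
rewrite !ln_div ?posrE //.
have h2 := ler_wpM2l (mulr_ge0 p0 (pi0 j)) h.
nra.
Qed.

End real.
Lemma ereal_aux (R : realType) (a b c : \bar R) : b \is a fin_num ->
  (a + b = c + 1 -> c - b = a - 1)%E.
Proof.
case: b => // r _.
move: a c => [a| |] [c| |] //=; try by [].
case=> e; congr (_%:E); lra.
Qed.

Section meas.
Context d (T : measurableType d) (R : realType).
Variable mu : {measure set T -> \bar R}.

Lemma meas_kl (f g : T -> R) : measurable_fun setT f -> measurable_fun setT g ->
  (forall x, 0 <= f x) -> (forall x, 0 <= g x) ->
  measurable_fun setT (fun x => kl_integrand (f x) (g x)).
Proof.
move=> mf mg f0 g0.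
rewrite (_ : (fun x => kl_integrand (f x) (g x)) = fun x =>
  if f x == 0 then 0%E else if g x == 0 then +oo%E
  else (f x * (ln (f x) - ln (g x)))%:E); last first.
  apply/funext => x; rewrite /kl_integrand.
  have [//|fn0] := eqVneq (f x) 0; have [//|gn0] := eqVneq (g x) 0.
  by rewrite ln_div // posrE lt_def ?fn0 ?gn0 ?f0 ?g0.
apply: measurable_fun_ifT; first exact: measurable_fun_eqr.
  exact: measurable_cst.
apply: measurable_fun_ifT; first exact: measurable_fun_eqr.
  exact: measurable_cst.
apply/measurable_EFinP; apply: measurable_funM => //.
apply: measurable_funB; exact: measurableT_comp.
Qed.

Lemma int_shift (f : T -> \bar R) (g : T -> R) :
  measurable_fun setT f -> measurable_fun setT g -> (forall x, 0 <= g x) ->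
  (forall x, 0 <= f x + (g x)%:E)%E -> (\int[mu]_x (g x)%:E = 1)%E ->
  (\int[mu]_x f x = \int[mu]_x (f x + (g x)%:E) - 1)%E.
Proof.
move=> mf mg g0 fg0 ig.
have mG : measurable_fun setT (fun x => (g x)%:E) by exact/measurable_EFinP.
have pw x : (f x + (g x)%:E + f^\- x = f^\+ x + (g x)%:E)%E.
  rewrite funeposE funenegE; move: (fg0 x); case: (f x) => [r| |] //= h.
    have [r0|r0] := leP 0 r.
      rewrite (max_l (_ : (0 <= r%:E)%E)) ?lee_fin //.
      by rewrite (max_r (_ : ((- r)%:E <= 0)%E)) ?lee_fin ?oppr_le0 // adde0.
    rewrite (max_r (_ : (r%:E <= 0)%E)) ?lee_fin ?(ltW r0) //.
    rewrite (max_l (_ : (0 <= (- r)%:E)%E)) ?lee_fin ?oppr_ge0 ?(ltW r0) //.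
    by rewrite add0e -!EFinD addrAC subrr add0r.
  rewrite (max_r (_ : (-oo <= 0)%E)) ?leNy0 //.
have nb x : (f^\- x <= (g x)%:E)%E.
  rewrite funenegE ge_max lee_fin g0 andbT.
  move: (fg0 x); case: (f x) => [r| |] //= h.
  by rewrite lee_fin; rewrite -EFinD lee_fin in h; lra.
  by rewrite leNye.
have g0E : forall x : T, setT x -> (0 <= (g x)%:E)%E by move=> x _; rewrite lee_fin.
have fp0 : forall x : T, setT x -> (0 <= f^\+ x)%E by move=> x _; exact: funepos_ge0.
have fn0 : forall x : T, setT x -> (0 <= f^\- x)%E by move=> x _; exact: funeneg_ge0.
have i1 := ge0_integralD mu measurableT (fun x _ => fg0 x)
  (emeasurable_funD mf mG) fn0 (measurable_funeneg mf).
have i2 := ge0_integralD mu measurableT fp0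
  (measurable_funepos mf) g0E mG.
have E : (fun x => f x + (g x)%:E + f^\- x)%E = (fun x => f^\+ x + (g x)%:E)%E.
  by apply/funext => x; exact: pw.
rewrite E i2 ig in i1.
rewrite integralE; apply: ereal_aux; last by rewrite -i1.
have ib0 : (0 <= \int[mu]_x f^\- x)%E by apply: integral_ge0 => x _; exact: funeneg_ge0.
rewrite ge0_fin_numE //.
have h1 : (\int[mu]_x f^\- x <= 1)%E.
  rewrite -ig; apply: ge0_le_integral => //.
  exact: measurable_funeneg.
by apply: le_lt_trans h1 _; rewrite ltry.
Qed.

End meas.

Theorem proposition2 (d : measure_display) (T : measurableType d) (R : realType)
  (mu : {measure set T -> \bar R}) (M : nat) (pi : 'I_M -> R)
  (P : 'I_M -> T -> R)
  (hP : forall i, is_density mu (P i))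
  (hpi : forall i, 0 <= pi i <= 1)
  (hsum : \sum_(i < M) pi i = 1) :
  (JS mu pi P <= JS_GM mu pi P)%E.
Proof.
have mP j : measurable_fun setT (P j) by case: (hP j).
have P0 j x : 0 <= P j x by case: (hP j) => _ [].
have iP j : (\int[mu]_x (P j x)%:E = 1)%E by case: (hP j) => _ [].
have pi0 j : 0 <= pi j by case/andP: (hpi j).
set mix := mixture pi P.
have mmix : measurable_fun setT mix.
  apply: measurable_sum => j.
  exact: (measurable_funM (measurable_cst (pi j)) (mP j)).
have mix0 x : 0 <= mix x by rewrite /mix /mixture; apply: sumr_ge0 => j _; rewrite mulr_ge0.
have imix : (\int[mu]_x (mix x)%:E = 1)%E.
  rewrite /mix /mixture.
  under eq_integral do rewrite -sumEFin.
  rewrite ge0_integral_sum //; last first.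
    by move=> j x _; rewrite lee_fin mulr_ge0.
    move=> j; apply/measurable_EFinP.
    exact: (measurable_funM (measurable_cst (pi j)) (mP j)).
  rewrite (eq_bigr (fun j => (pi j)%:E)); last first.
    move=> j _; under eq_integral do rewrite EFinM.
    rewrite ge0_integralZl_EFin //; first by rewrite iP mule1.
    - by move=> x _; rewrite lee_fin.
    - exact/measurable_EFinP.
  by rewrite sumEFin hsum.
have klp (f g : T -> R) : measurable_fun setT f -> measurable_fun setT g ->
    (forall x, 0 <= f x) -> (forall x, 0 <= g x) ->
    (\int[mu]_x (g x)%:E = 1)%E ->
    KL mu f g = (\int[mu]_x (kl_integrand (f x) (g x) + (g x)%:E) - 1)%E.
  move=> mf mg f0 g0 ig; rewrite /KL; apply: int_shift => //.
    exact: meas_kl.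
  by move=> x; apply: (le_trans _ (@kl_ge_p _ _ _ (f0 x) (g0 x))); rewrite lee_fin.
have mkl' (f g : T -> R) : measurable_fun setT f -> measurable_fun setT g ->
    (forall x, 0 <= f x) -> (forall x, 0 <= g x) ->
    measurable_fun setT (fun x => kl_integrand (f x) (g x) + (g x)%:E)%E.
  move=> mf mg f0 g0; apply: emeasurable_funD; first exact: meas_kl.
  exact/measurable_EFinP.
have Kd i j : (\int[mu]_x (kl_integrand (P i x) (P j x) + (P j x)%:E) =
    KL mu (P i) (P j) + 1)%E by rewrite klp // subeK.
have KL0 i j : (0 <= KL mu (P i) (P j))%E.
  rewrite klp // suber_ge0 //.
  apply: (@le_trans _ _ (\int[mu]_x (P i x)%:E)%E); first by rewrite iP.
  apply: ge0_le_integral => //.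
  - by move=> x _; rewrite lee_fin.
  - exact/measurable_EFinP.
  - exact: mkl'.
  - by move=> x _; exact: (@kl_ge_p _ _ _ (P0 i x) (P0 j x)).
have key i : (KL mu (P i) mix <=
    \sum_(j < M) (pi j)%:E * KL mu (P i) (P j))%E.
  rewrite klp // leeBlDr //.
  apply: (@le_trans _ _ (\int[mu]_x \sum_(j < M)
     (pi j)%:E * (kl_integrand (P i x) (P j x) + (P j x)%:E))%E).
    apply: ge0_le_integral => //.
    - by move=> x _; apply: (le_trans _ (@kl_ge_p _ _ _ (P0 i x) (mix0 x))); rewrite lee_fin.
    - exact: mkl'.
    - by apply: emeasurable_sum => j; apply: measurable_funeM; exact: mkl'.
    - by move=> x _; exact: (@kl_mix _ M pi _ _ (P0 i x) pi0 (fun j => P0 j x) hsum).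
  rewrite ge0_integral_sum //; first last.
  - move=> j x _; apply: mule_ge0; first by rewrite lee_fin.
    by apply: (le_trans _ (@kl_ge_p _ _ _ (P0 i x) (P0 j x))); rewrite lee_fin.
  - by move=> j; apply: measurable_funeM; exact: mkl'.
  rewrite (eq_bigr (fun j => (pi j)%:E * (KL mu (P i) (P j) + 1))%E); last first.
    move=> j _; rewrite ge0_integralZl_EFin // ?Kd //.
    - move=> x _; apply: (le_trans _ (@kl_ge_p _ _ _ (P0 i x) (P0 j x))); rewrite lee_fin.
      exact: P0.
    - exact: mkl'.
  under eq_bigr do rewrite ge0_muleDr // mule1.
  by rewrite big_split /= sumEFin hsum.
rewrite /JS /JS_GM; apply: lee_sum => i _.
apply: le_trans (lee_wpmul2l _ (key i)) _; first by rewrite lee_fin.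
rewrite ge0_sume_distrr; last by move=> j _; apply: mule_ge0; rewrite ?lee_fin.
have KLii : KL mu (P i) (P i) = 0%E.
  rewrite /KL; under eq_integral do rewrite kl_diag; exact: integral0.
rewrite (bigD1 i) //= KLii mule0 mule0 add0e.
by apply: lee_sum => j _; rewrite muleA -EFinM.
Qed.
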